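(* Let $G$ be a checkerboard-colored graph cellularly embedded on the torus, with faces colored red and blue. Let $k_r$ and $k_b$ be the total number of red faces and of blue faces respectively. Suppose each vertex of $G$ is incident to an odd number of red faces and an odd number of blue faces. If $G$ contains an A-trail, then $k_r$ is odd or $k_b$ is odd.
   Context: A checkerboard coloring of an embedded graph is a proper 2-coloring (red/blue) of its faces, i.e. faces sharing an edge receive different colors. A transition at a vertex is a partition of its half-edges into pairs; it is smooth if it only pairs half-edges adjacent in the cyclic rotation at the vertex. An A-trail is an Eulerian circuit all of whose induced transitions (pairing consecutively traversed half-edges) are smooth. *)

(* Defs.v *)
(* Cellularly embedded graphs on the torus are encoded as
   combinatorial maps (rotation systems): darts = half-edges. *)
From mathcomp Require Import all_boot fingroup perm.

Set Implicit Arguments.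
Unset Strict Implicit.
Unset Printing Implicit Defensive.

Section Maps.
Variable D : finType.

(* alpha : edge involution (pairs the two half-edges of an edge);
   sigma : rotation at vertices (vertices = sigma-orbits);
   faces = orbits of phi d := sigma (alpha d). *)
Definition face_perm (alpha sigma : {perm D}) : {perm D} := (alpha * sigma)%g.

Definition vertices (sigma : {perm D}) := porbits sigma.
Definition edges (alpha : {perm D}) := porbits alpha.
Definition faces (alpha sigma : {perm D}) := porbits (face_perm alpha sigma).

(* A connected combinatorial map with Euler characteristic V - E + F = 0,
   i.e. a graph cellularly embedded on the torus. *)
Definition torus_map (alpha sigma : {perm D}) : Prop :=
  [/\ 0 < #|D|,
      (forall d, alpha (alpha d) = d),
      (forall d, alpha d != d),
      (forall x y, connect [rel a b | (b == alpha a) || (b == sigma a)] x y)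
    & #|vertices sigma| + #|faces alpha sigma| = #|edges alpha|].

(* col d = true means the face containing dart d is red, false means blue. *)
Definition checkerboard (alpha sigma : {perm D}) (col : D -> bool) : Prop :=
  (forall d, col (face_perm alpha sigma d) = col d) /\
  (forall d, col (alpha d) != col d).

Definition red_faces alpha sigma (col : D -> bool) : {set {set D}} :=
  [set f in faces alpha sigma | [exists d in f, col d]].
Definition blue_faces alpha sigma (col : D -> bool) : {set {set D}} :=
  [set f in faces alpha sigma | [exists d in f, ~~ col d]].

(* Face incidences at a vertex v, counted by corners: the corner at dart d
   lies in the face containing d. *)
Definition red_at (v : {set D}) (col : D -> bool) := #|[set d in v | col d]|.
Definition blue_at (v : {set D}) (col : D -> bool) := #|[set d in v | ~~ col d]|.

(* An Eulerian circuit is a cyclic sequence w = [d_1; ...; d_m] of darts,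
   d_i being the half-edge along which the i-th edge is left; every edge is
   traversed exactly once, and the arrival half-edge alpha d_i is at the
   same vertex as the next departure half-edge d_{i+1} (cyclically). *)
Definition eulerian_circuit (alpha sigma : {perm D}) (w : seq D) : Prop :=
  [/\ uniq (w ++ map alpha w),
      (forall d, d \in w ++ map alpha w)
    & path.cycle [rel x y | y \in porbit sigma (alpha x)] w].

(* The induced transition pairs alpha d_i with d_{i+1}; it is smooth when
   these two half-edges are adjacent in the rotation at the vertex. *)
Definition smooth_pair (sigma : {perm D}) (a b : D) : bool :=
  (b == sigma a) || (a == sigma b).

Definition A_trail (alpha sigma : {perm D}) (w : seq D) : Prop :=
  eulerian_circuit alpha sigma w /\
  path.cycle [rel x y | smooth_pair sigma (alpha x) y] w.

End Maps.

(* Main.v *)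
Require Import Defs.
From mathcomp Require Import all_boot fingroup perm.
Set Implicit Arguments. Unset Strict Implicit. Unset Printing Implicit Defensive.
Section S.
Variable T : finType.
Implicit Types s : {perm T}.
Lemma porbit_fix s z : s z = z -> porbit s z = [set z].
Proof.
move=> sz; apply/setP=> y; rewrite inE; apply/porbitP/eqP => [[i ->]|->]; last by exists 0; rewrite expg0 perm1.
by elim: i => [|i IH]; rewrite ?expg0 ?perm1 // expgSr permM IH.
Qed.
Lemma card_porbits_sum s : #|T| = \sum_(O in porbits s) #|O|.
Proof.
rewrite -sum1_card (partition_big_imset (porbit s)) /=.
apply: eq_bigr => O /imsetP [x _ ->]. rewrite -sum1_card.
apply: eq_bigl => y; by rewrite eq_porbit_mem.
Qed.
Lemma odd_orbits s : (forall x, odd #|porbit s x|) -> odd #|porbits s| = odd #|T|.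
Proof.
move=> H; rewrite (card_porbits_sum s) -[#|porbits s|]sum1_card.
apply: (big_rec2 (fun a b => odd a = odd b)) => // O a b /imsetP [x _ ->] e.
by rewrite !oddD e H.
Qed.
Lemma card_porbits_fix s (A : {set T}) : (forall x, x \notin A -> s x = x) ->
  #|porbits s| = #|[set porbit s x | x in A]| + #|~: A|.
Proof.
move=> H.
have -> : porbits s = [set porbit s x | x in A] :|: [set porbit s x | x in ~: A].
  rewrite -imsetU setUCr; apply/setP => O; apply/imsetP/imsetP => [][x _ ->]; by exists x.
rewrite cardsU.
have -> : [set porbit s x | x in A] :&: [set porbit s x | x in ~: A] = set0.
  apply/setP => O; rewrite !inE; apply/negP => /andP [/imsetP [x xA ->] /imsetP [z zA]].
  rewrite inE in zA; rewrite (porbit_fix (H _ zA)) => e.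
  have := porbit_id s x; rewrite e inE => /eqP ex; by rewrite ex (negbTE zA) in xA.
rewrite cards0 subn0; congr (_ + _).
rewrite card_in_imset // => x y; rewrite !inE => xA yA.
by rewrite (porbit_fix (H _ xA)) (porbit_fix (H _ yA)) => /setP/(_ x); rewrite !inE eqxx => /esym/eqP.
Qed.
Lemma orbit_alt (q t : {perm T}) y : (forall z, q z = z \/ q z = t z) ->
  porbit q y = [set y] \/ porbit q y = porbit t y.
Proof.
move=> H; case: (H y) => [e|e]; first by left; exact: porbit_fix.
case: (eqVneq (t y) y) => [ty|ty]; first by left; apply: porbit_fix; rewrite e ty.
right.
have P i : q ((t^+i)%g y) = t ((t^+i)%g y) /\ t ((t^+i)%g y) != (t^+i)%g y.
  elim: i => [|i [IH1 IH2]]; first by rewrite expg0 perm1.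
  rewrite expgSr permM; set z := (t^+i)%g y in IH1 IH2 *.
  case: (H (t z)) => e2.
    have /perm_inj e3 : q (t z) = q z by rewrite e2 IH1.
    by rewrite e3 eqxx in IH2.
  split => //; apply/negP => /eqP /perm_inj e3; by rewrite e3 eqxx in IH2.
have Q i : (q^+i)%g y = (t^+i)%g y.
  elim: i => [|i IH]; first by rewrite !expg0 !perm1.
  by rewrite !expgSr !permM IH (P i).1.
by apply/setP => z; apply/porbitP/porbitP => [][i ->]; exists i; rewrite Q.
Qed.
End S.

Section Core.
Variables (D : finType) (alpha sigma : {perm D}) (col : D -> bool).
Hypothesis Hinv : forall d, alpha (alpha d) = d.
Hypothesis Hcb : checkerboard alpha sigma col.

Lemma phiE x : face_perm alpha sigma x = sigma (alpha x).
Proof. by rewrite /face_perm permM. Qed.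

Lemma colA z : col (alpha z) = ~~ col z.
Proof. by move: (Hcb.2 z); case: (col (alpha z)); case: (col z). Qed.

Lemma colS z : col (sigma z) = ~~ col z.
Proof. by have := Hcb.1 (alpha z); rewrite phiE Hinv colA => ->. Qed.

Lemma col_iter z k : col ((sigma ^+ k)%g z) = odd k (+) col z.
Proof.
elim: k => [|k IH]; first by rewrite expg0 perm1.
by rewrite expgSr permM colS IH /= negb_add.
Qed.

Lemma porbit_sq y :
  porbit (sigma * sigma)%g y = [set d in porbit sigma y | col d == col y].
Proof.
have E i : ((sigma * sigma) ^+ i)%g = (sigma ^+ (2 * i))%g.
  by rewrite expgM expgS expg1.
apply/setP => d; rewrite inE; apply/porbitP/andP => [[i ->]|[/porbitP [k ->] c]].
  by rewrite E col_iter oddM /= mem_porbit.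
exists k./2; rewrite E mul2n.
rewrite col_iter in c.
have ok : ~~ odd k by move: c; case: (odd k); case: (col y).
by rewrite -{1}(odd_double_half k) (negbTE ok).
Qed.
Variable w : seq D.
Hypothesis Hodd : forall y, odd #|porbit (sigma * sigma)%g y|.
Hypothesis Hu : uniq w.
Hypothesis Hred : forall d, (d \in w) = col d.
Hypothesis Hsm : forall x, x \in w ->
  next w x = sigma (alpha x) \/ sigma (next w x) = alpha x.
Variable x0 : D.
Hypothesis Hx0 : x0 \in w.

Lemma core : odd #|red_faces alpha sigma col|.
Proof.
pose phi := face_perm alpha sigma.
have colphi x : col (phi x) = col x by exact: Hcb.1.
have nextout x : x \notin w -> next w x = x.
  by move=> xw; rewrite next_nth (negbTE xw).
pose N := perm (can_inj (prev_next Hu)).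
have NE x : N x = next w x by rewrite permE.
pose f x := if col x then phi x else x.
have f_inj : injective f.
  move=> x y; rewrite /f; case cx: (col x); case cy: (col y).
  - exact: perm_inj.
  - by move=> e; rewrite -e colphi cx in cy.
  - by move=> e; rewrite e colphi cy in cx.
  - by [].
pose P := perm f_inj.
have PE x : P x = f x by rewrite permE.
pose Q := (P^-1 * N)%g.
have NPQ : N = (P * Q)%g by rewrite /Q mulKVg.
have oddQ : odd_perm Q = false.
  suff H : forall y, odd #|porbit Q y|.
    by rewrite /odd_perm (odd_orbits H) addbb.
  move=> y.
  have alt : forall z, Q z = z \/ Q z = ((sigma * sigma)^-1)%g z.
    move=> z; rewrite -(permKV P z); set x := (P^-1)%g z.
    rewrite /Q permM permK NE PE /f.
    case cx: (col x).
    - have xw : x \in w by rewrite Hred.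
      case: (Hsm xw) => e; first by left; rewrite e /phi phiE.
      right; rewrite /phi phiE invMg !permM permK -e permK //.
    - by left; rewrite nextout // Hred cx.
  case: (orbit_alt y alt) => ->; first by rewrite cards1.
  by rewrite porbitV.
have Nfix : forall x, x \notin [set x | col x] -> N x = x.
  by move=> x; rewrite inE -Hred NE => /nextout.
have Pfix : forall x, x \notin [set x | col x] -> P x = x.
  by move=> x; rewrite inE PE /f => /negbTE ->.
have cN := card_porbits_fix Nfix.
have cP := card_porbits_fix Pfix.
have c1 : #|[set porbit N x | x in [set x | col x]]| = 1.
  have -> : [set porbit N x | x in [set x | col x]] = [set porbit N x0].
    apply/setP => O; rewrite inE; apply/imsetP/eqP => [[x]|->].
      rewrite inE -Hred => xw ->; apply/eqP; rewrite eq_porbit_mem.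
      have : fconnect N x0 x.
        rewrite (eq_fconnect NE) (fconnect_cycle (cycle_next Hu) Hx0) //.
      move/iter_findex => <-; set i := findex _ _ _.
      suff -> : iter i N x0 = (N ^+ i)%g x0 by exact: mem_porbit.
      elim: i => [|i IH]; first by rewrite expg0 perm1.
      by rewrite iterS IH expgSr permM.
    by exists x0; rewrite // inE -Hred.
  by rewrite cards1.
have Pphi x : col x -> porbit P x = porbit phi x.
  move=> cx.
  have It i : col ((phi ^+ i)%g x) /\ (P ^+ i)%g x = (phi ^+ i)%g x.
    elim: i => [|i [IH1 IH2]]; first by rewrite !expg0 !perm1.
    by rewrite !expgSr (permM (phi ^+ i)%g) (permM (P ^+ i)%g) colphi IH2 PE /f IH1.
  by apply/setP => z; apply/porbitP/porbitP => [][i ->]; exists i; rewrite (It i).2.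
have RF : red_faces alpha sigma col = [set porbit P x | x in [set x | col x]].
  apply/setP => O; rewrite inE; apply/andP/imsetP => [[/imsetP [y _ ->] /existsP [d /andP [dO cd]]]|[x]].
    exists d; first by rewrite inE.
    rewrite Pphi //; apply/esym/eqP; by rewrite eq_porbit_mem.
  rewrite inE => cx ->; rewrite Pphi //; split; first exact: imset_f.
  by apply/existsP; exists x; rewrite porbit_id.
have := congr1 (@odd_perm D) NPQ; rewrite odd_permM oddQ addbF /odd_perm cN cP c1 -RF !oddD.
by case: (odd #|D|); case: (odd #|~: _|); case: (odd #|red_faces _ _ _|).
Qed.
End Core.
Theorem mainTheorem5 (D : finType) (alpha sigma : {perm D}) (col : D -> bool) :
  torus_map alpha sigma ->
  checkerboard alpha sigma col ->
  (forall v, v \in vertices sigma -> odd (red_at v col) && odd (blue_at v col)) ->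
  (exists w : seq D, A_trail alpha sigma w) ->
  odd #|red_faces alpha sigma col| || odd #|blue_faces alpha sigma col|.
Proof.
move=> [Dpos Hinv _ _ _] Hcb Hv [w [[Huq Hcov Hcyc] Hsc]].
have Hodd : forall y, odd #|porbit (sigma * sigma)%g y|.
  move=> y; rewrite (porbit_sq Hinv Hcb).
  have vin : porbit sigma y \in vertices sigma by apply: imset_f.
  have /andP [o1 o2] := Hv _ vin.
  case cy: (col y).
    suff -> : [set d in porbit sigma y | col d == true] = [set d in porbit sigma y | col d] by [].
    by apply/setP => d; rewrite !inE eqb_id.
  suff -> : [set d in porbit sigma y | col d == false] = [set d in porbit sigma y | ~~ col d] by [].
  by apply/setP => d; rewrite !inE eqbF_neg.
have Hu : uniq w by move: Huq; rewrite cat_uniq => /andP [].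
have [x0 Hx0] : exists x0, x0 \in w.
  have [x _] : exists x, x \in [set: D] by apply/set0Pn; rewrite -card_gt0 cardsT.
  move: (Hcov x); rewrite mem_cat => /orP [xw|]; first by exists x.
  by case/mapP => y yw _; exists y.
have Hsm : forall x, x \in w -> next w x = sigma (alpha x) \/ sigma (next w x) = alpha x.
  move=> x xw; have /orP [/eqP e|/eqP e] := next_cycle Hsc xw; [by left | by right].
have Hcn : forall x, x \in w -> col (next w x) = col x.
  move=> x xw; case: (Hsm x xw) => e.
    by rewrite e (colS Hinv Hcb) (colA Hcb) negbK.
  by have := colS Hinv Hcb (next w x); rewrite e (colA Hcb) => /negb_inj.
have Hcw : forall x, x \in w -> col x = col x0.
  move=> x xw; have : fconnect (next w) x0 x by rewrite (fconnect_cycle (cycle_next Hu) Hx0).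
  move/iter_findex => <-; set i := findex _ _ _.
  suff : iter i (next w) x0 \in w /\ col (iter i (next w) x0) = col x0 by case.
  elim: i => [|i [IH1 IH2]] //=.
  by rewrite mem_next Hcn.
have Hred : forall d, (d \in w) = (col d == col x0).
  move=> d; apply/idP/eqP => [/Hcw //|cd].
  move: (Hcov d); rewrite mem_cat => /orP [//|/mapP [y yw e]].
  by move: cd; rewrite e (colA Hcb) (Hcw _ yw); case: (col x0).
case c0: (col x0).
  apply/orP; left; apply: (core Hcb Hodd Hu _ Hsm Hx0) => d; by rewrite Hred c0 eqb_id.
apply/orP; right.
have Hcb' : checkerboard alpha sigma (fun d => ~~ col d).
  by split => d; [rewrite Hcb.1 | rewrite (colA Hcb); case: (col d)].
apply: (core Hcb' Hodd Hu _ Hsm Hx0) => d; by rewrite Hred c0 eqbF_neg.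
Qed.
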